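(* Let $d\ge2$ be an integer and $(p_{nm})_{n,m\in\{0,\dots,d-1\}}$ a probability vector with $p_{0m}=0$ for all $m\in\{1,\dots,d-1\}$. Let the initial shared state be $\sum_{n,m}p_{nm}|\Phi^{n,m}\rangle\langle\Phi^{n,m}|$ (fidelity $p_{00}$), let $\mathcal{N}$ be the qudit Pauli channel with probabilities $p_{nm}$, and let $F_N$ be the fidelity $\langle\Phi^{0,0}|\rho_N|\Phi^{0,0}\rangle$ after $N$ successful rounds of the single-carrier protocol without adaptive pre-processing. Then $F_N\to1$ as $N\to\infty$ if and only if $$p_{00}>\max_{n\in\{1,\dots,d-1\}}p_{X=n},\qquad p_{X=n}:=\sum_{m=0}^{d-1}p_{nm}.$$
   Context: $\omega=e^{2\pi i/d}$; on $\mathbb{C}^d$, $X|j\rangle=|(j+1)\bmod d\rangle$, $Z|j\rangle=\omega^j|j\rangle$. Bell states $|\Phi^{n,m}\rangle=\frac1{\sqrt d}\sum_{j=0}^{d-1}\omega^{mj}|j,(j+n)\bmod d\rangle$. The qudit Pauli channel is $\mathcal{N}(\rho)=\sum_{n,m}p_{nm}Z^mX^n\rho X^{-n}Z^{-m}$. Single-carrier round: Alice prepares a carrier $T$ in $|0\rangle$ and applies $|j\rangle_A|k\rangle_T\mapsto|j\rangle_A|(j+k)\bmod d\rangle_T$; the carrier passes through $\mathcal{N}$; Bob applies $|j\rangle_B|k\rangle_T\mapsto|j\rangle_B|(k-j)\bmod d\rangle_T$ and measures $T$ in the computational basis; the round succeeds iff the outcome is $0$, and then the shared state is kept. Successive rounds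 act on the kept state, each with a fresh carrier through $\mathcal{N}$. *)

(* Defs.v *)
From HB Require Import structures.
From mathcomp Require Import all_boot all_order all_algebra.
From mathcomp Require Import all_classical all_reals all_analysis.
From mathcomp Require Import complex.
Set Implicit Arguments. Unset Strict Implicit. Unset Printing Implicit Defensive.
Import Order.TTheory GRing.Theory Num.Theory.
Local Open Scope ring_scope.

Section QuditProtocol.
Variable R : realType.
Local Notation C := (R[i]).
Variable d : nat.

(* Basis indices are naturals j < d; all kernels vanish outside this range. *)
Definition inr (j : nat) : bool := (j < d)%N.

Definition omega : C := Complex (cos (2 * pi / d%:R)) (sin (2 * pi / d%:R)).

(* single-qudit operators as kernels  <i| A |i0> *)
Definition op1 := nat -> nat -> C.
Definition id1 : op1 := fun i i0 => ((inr i && inr i0 && (i == i0)) : nat)%:R.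
Definition mul1 (A B : op1) : op1 := fun i k => \sum_(j < d) A i j * B j k.
Definition pow1 (A : op1) (n : nat) : op1 := iter n (mul1 A) id1.
Definition adj1 (A : op1) : op1 := fun i i0 => (A i0 i)^*.
Definition Xop : op1 := fun i i0 => ((inr i && inr i0 && (i == (i0 + 1) %% d)%N) : nat)%:R.
Definition Zop : op1 := fun i i0 => ((inr i && inr i0 && (i == i0)) : nat)%:R * omega ^+ i.
Definition pauli (n m : nat) : op1 := mul1 (pow1 Zop m) (pow1 Xop n).

(* two-qudit (A,B) operators: <a b| rho |a' b'> = rho a b a' b' *)
Definition op2 := nat -> nat -> nat -> nat -> C.
(* three-qudit (A,B,T) operators: <a b t| S |a' b' t'> = S a b t a' b' t' *)
Definition op3 := nat -> nat -> nat -> nat -> nat -> nat -> C.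

Definition conj3 (U S : op3) : op3 := fun a b t a' b' t' =>
  \sum_(a0 < d) \sum_(b0 < d) \sum_(t0 < d) \sum_(a1 < d) \sum_(b1 < d) \sum_(t1 < d)
    U a b t a0 b0 t0 * S a0 b0 t0 a1 b1 t1 * (U a' b' t' a1 b1 t1)^*.

Definition gateA : op3 := fun a b t a0 b0 t0 =>
  ((inr a && inr b && inr t && inr a0 && inr b0 && inr t0 &&
    (a == a0) && (b == b0) && (t == (a0 + t0) %% d)%N) : nat)%:R.
(* Bob's gate |j>_B|k>_T -> |j>_B|k-j mod d>_T (identity on A) *)
Definition gateB : op3 := fun a b t a0 b0 t0 =>
  ((inr a && inr b && inr t && inr a0 && inr b0 && inr t0 &&
    (a == a0) && (b == b0) && (t == (t0 + (d - b0)) %% d)%N) : nat)%:R.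
Definition onT (P : op1) : op3 := fun a b t a0 b0 t0 =>
  ((inr a && inr b && inr a0 && inr b0 && (a == a0) && (b == b0)) : nat)%:R * P t t0.

Definition pauli_channelT (p : nat -> nat -> R) (S : op3) : op3 := fun a b t a' b' t' =>
  \sum_(n < d) \sum_(m < d) real_complex R (p n m) * conj3 (onT (pauli n m)) S a b t a' b' t'.

Definition attach0 (rho : op2) : op3 := fun a b t a' b' t' =>
  rho a b a' b' * (((t == 0%N) && (t' == 0%N)) : nat)%:R.

(* unnormalised AB state conditioned on outcome 0 of T in the computational basis *)
Definition project0 (S : op3) : op2 := fun a b a' b' => S a b 0%N a' b' 0%N.
Definition tr2 (rho : op2) : C := \sum_(a < d) \sum_(b < d) rho a b a b.

Definition round (p : nat -> nat -> R) (rho : op2) : op2 :=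
  let tau := project0 (conj3 gateB (pauli_channelT p (conj3 gateA (attach0 rho)))) in
  fun a b a' b' => tau a b a' b' / tr2 tau.

Definition bell (n m : nat) : nat -> nat -> C := fun j k =>
  ((inr j && inr k && (k == (j + n) %% d)%N) : nat)%:R * omega ^+ (m * j)
  / real_complex R (Num.sqrt (d%:R : R)).
Definition bell_proj (n m : nat) : op2 := fun a b a' b' =>
  bell n m a b * (bell n m a' b')^*.

Definition init_state (p : nat -> nat -> R) : op2 := fun a b a' b' =>
  \sum_(n < d) \sum_(m < d) real_complex R (p n m) * bell_proj n m a b a' b'.

Definition state_after (p : nat -> nat -> R) (N : nat) : op2 := iter N (round p) (init_state p).

Definition fidelity (p : nat -> nat -> R) (N : nat) : C :=
  \sum_(a < d) \sum_(b < d) \sum_(a' < d) \sum_(b' < d)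
    (bell 0 0 a b)^* * state_after p N a b a' b' * bell 0 0 a' b'.

Definition pX (p : nat -> nat -> R) (n : nat) : R := \sum_(m < d) p n m.

End QuditProtocol.

(* Main.v *)
Require Import Defs.
From HB Require Import structures.
From mathcomp Require Import all_boot all_order all_algebra.
From mathcomp Require Import all_classical all_reals all_analysis.
From mathcomp Require Import complex.
From mathcomp.algebra_tactics Require Import ring.
Import Order.TTheory GRing.Theory Num.Theory.
Import numFieldNormedType.Exports.
Local Open Scope classical_set_scope.
Local Open Scope ring_scope.
Section Alg.
Variable R : realType.
Variable d : nat.
Hypothesis hd : (0 < d)%N.
Local Notation C := (R[i]).
Local Notation om := (omega R d).

Lemma sum1n {F : 'I_d -> C} {k : nat} (hk : (k < d)%N) :
  (forall j : 'I_d, (j : nat) != k -> F j = 0) -> \sum_(j < d) F j = F (Ordinal hk).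
Proof.
move=> h; rewrite (bigD1 (Ordinal hk)) //= big1 ?addr0 // => j hj; apply: h.
Qed.

Lemma modsub x y n : (x < d)%N -> (y < d)%N -> (n <= d)%N ->
  ((x + (d - n)) %% d == y)%N = (x == (y + n) %% d)%N.
Proof.
move=> hx hy hn.
rewrite -{1}(modn_small hy).
by rewrite -(eqn_modDr n) -addnA subnK // modnDr modn_small.
Qed.

Lemma noshift a n : (a < d)%N -> (n < d)%N -> (a == (a + n) %% d)%N = (n == 0%N).
Proof.
move=> ha hn; rewrite -{1}(modn_small ha) -{1}(addn0 a) eqn_modDl mod0n modn_small // eq_sym.
Qed.

Lemma powX n t t0 : (t < d)%N -> (t0 < d)%N ->
  pow1 d (Xop R d) n t t0 = ((t == (t0 + n) %% d)%N : nat)%:R.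
Proof.
elim: n t t0 => [|n IH] t t0 ht ht0.
  by rewrite /pow1 /= /id1 /inr ht ht0 addn0 modn_small.
rewrite /pow1 iterS -/(pow1 _ _ n) /mul1.
have hk : ((t0 + n) %% d < d)%N by rewrite ltn_pmod.
rewrite (sum1n hk) => [|j hj]; last first.
  by rewrite IH // (negbTE hj) mulr0.
rewrite IH //= eqxx mulr1 /Xop /inr ht hk /= modnDml addn1 addnS.
done.
Qed.

Lemma powZ m t t0 : (t < d)%N -> (t0 < d)%N ->
  pow1 d (Zop R d) m t t0 = ((t == t0) : nat)%:R * om ^+ (t * m).
Proof.
elim: m t t0 => [|m IH] t t0 ht ht0.
  by rewrite /pow1 /= /id1 /inr ht ht0 muln0 expr0 mulr1.
rewrite /pow1 iterS -/(pow1 _ _ m) /mul1.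
rewrite (sum1n ht) => [|j hj]; last first.
  by rewrite /Zop /inr eq_sym (negbTE hj) !andbF mul0r mul0r.
rewrite IH //= /Zop /inr ht eqxx /= mul1r mulnS exprD.
by rewrite mulrCA.
Qed.

Lemma pauliE n m t t0 : (t < d)%N -> (t0 < d)%N ->
  pauli R d n m t t0 = ((t == (t0 + n) %% d)%N : nat)%:R * om ^+ (t * m).
Proof.
move=> ht ht0; rewrite /pauli /mul1 (sum1n ht) => [|j hj]; last first.
  by rewrite powZ // eq_sym (negbTE hj) mul0r mul0r.
by rewrite powZ // powX //= eqxx mul1r mulrC.
Qed.

Lemma pauli_if n m t (t0 : 'I_d) : (t < d)%N -> (n <= d)%N ->
  pauli R d n m t t0 = if ((t + (d - n)) %% d == t0)%N then om ^+ (t * m) else 0.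
Proof.
move=> ht hn; rewrite pauliE // modsub //.
by case: ifP => _; rewrite ?mul1r ?mul0r.
Qed.



Lemma conj3_fun (U S : op3 R) a b t a' b' t' u0 u1 u2 v0 v1 v2 (c c' : C) :
  (u0 < d)%N -> (u1 < d)%N -> (u2 < d)%N -> (v0 < d)%N -> (v1 < d)%N -> (v2 < d)%N ->
  (forall y0 y1 y2 : 'I_d, U a b t y0 y1 y2 =
     if [&& (y0 == u0 :> nat), (y1 == u1 :> nat) & (y2 == u2 :> nat)] then c else 0) ->
  (forall y0 y1 y2 : 'I_d, U a' b' t' y0 y1 y2 =
     if [&& (y0 == v0 :> nat), (y1 == v1 :> nat) & (y2 == v2 :> nat)] then c' else 0) ->
  conj3 d U S a b t a' b' t' = c * S u0 u1 u2 v0 v1 v2 * c'^*.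
Proof.
move=> h0 h1 h2 g0 g1 g2 hU hU'; rewrite /conj3.
rewrite (sum1n h0) => [|j hj]; last first.
  by do 5!(apply: big1 => ? _); rewrite hU (negbTE hj) /= !mul0r.
rewrite (sum1n h1) => [|j hj]; last first.
  by do 4!(apply: big1 => ? _); rewrite hU /= eqxx (negbTE hj) /= !mul0r.
rewrite (sum1n h2) => [|j hj]; last first.
  by do 3!(apply: big1 => ? _); rewrite hU /= !eqxx (negbTE hj) /= !mul0r.
rewrite (sum1n g0) => [|j hj]; last first.
  by do 2!(apply: big1 => ? _); rewrite hU' (negbTE hj) /= conjC0 mulr0.
rewrite (sum1n g1) => [|j hj]; last first.
  by do 1!(apply: big1 => ? _); rewrite hU' /= eqxx (negbTE hj) /= conjC0 mulr0.
rewrite (sum1n g2) => [|j hj]; last first.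
  by rewrite hU' /= !eqxx (negbTE hj) /= conjC0 mulr0.
by rewrite hU hU' /= !eqxx.
Qed.

Lemma gateA_if a b t (y0 y1 y2 : 'I_d) : (a < d)%N -> (b < d)%N -> (t < d)%N ->
  gateA R d a b t y0 y1 y2 =
  if [&& (y0 == a :> nat), (y1 == b :> nat) & (y2 == ((t + (d - a)) %% d)%N :> nat)] then 1 else 0.
Proof.
move=> ha hb ht.
have E : [&& inr d a, inr d b, inr d t, inr d y0, inr d y1, inr d y2, (a == y0), (b == y1)
            & (t == (y0 + y2) %% d)%N] =
         [&& (y0 == a :> nat), (y1 == b :> nat) & (y2 == ((t + (d - a)) %% d)%N :> nat)].
  rewrite /inr ha hb ht !ltn_ord /= (eq_sym a) (eq_sym b).
  case: (eqVneq (y0 : nat) a) => [e|] //=; rewrite e.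
  by rewrite [(y2 : nat) == _]eq_sym modsub ?ltn_ord ?(ltnW ha) // addnC.
rewrite /gateA -!andbA E.
by case: ifP.
Qed.

Lemma gateB_if a b (y0 y1 y2 : 'I_d) : (a < d)%N -> (b < d)%N ->
  gateB R d a b 0 y0 y1 y2 =
  if [&& (y0 == a :> nat), (y1 == b :> nat) & (y2 == b :> nat)] then 1 else 0.
Proof.
move=> ha hb.
have E : [&& inr d a, inr d b, inr d 0, inr d y0, inr d y1, inr d y2, (a == y0), (b == y1)
            & (0 == (y2 + (d - y1)) %% d)%N] =
         [&& (y0 == a :> nat), (y1 == b :> nat) & (y2 == b :> nat)].
  rewrite /inr ha hb hd !ltn_ord /= (eq_sym a) (eq_sym b).
  case: (eqVneq (y1 : nat) b) => [e|] //=; rewrite ?andbF // e.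
  by rewrite [(0 == _)%N]eq_sym modsub ?ltn_ord ?(ltnW hb) // add0n modn_small.
rewrite /gateB -!andbA E.
by case: ifP.
Qed.

Lemma onT_if n m a b t (y0 y1 y2 : 'I_d) : (a < d)%N -> (b < d)%N -> (t < d)%N -> (n <= d)%N ->
  onT d (pauli R d n m) a b t y0 y1 y2 =
  if [&& (y0 == a :> nat), (y1 == b :> nat) & (y2 == ((t + (d - n)) %% d)%N :> nat)]
  then om ^+ (t * m) else 0.
Proof.
move=> ha hb ht hn.
rewrite /onT pauli_if // /inr ha hb !ltn_ord /= (eq_sym a) (eq_sym b) [(y2 : nat) == _]eq_sym.
case: (y0 == a :> nat); case: (y1 == b :> nat); rewrite /= ?mul0r ?mul1r //; by case: ifP.
Qed.


Definition tau (p : nat -> nat -> R) (rho : op2 R) : op2 R :=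
  project0 (conj3 d (gateB R d) (pauli_channelT d p (conj3 d (gateA R d) (attach0 rho)))).

Lemma S1E (rho : op2 R) a b t a' b' t' : (a < d)%N -> (b < d)%N -> (t < d)%N ->
  (a' < d)%N -> (b' < d)%N -> (t' < d)%N ->
  conj3 d (gateA R d) (attach0 rho) a b t a' b' t' =
  rho a b a' b' * (((t == a) && (t' == a'))%N : nat)%:R.
Proof.
move=> ha hb ht ha' hb' ht'.
have H := @conj3_fun (gateA R d) (attach0 rho) a b t a' b' t' a b ((t + (d-a))%%d)%N
  a' b' ((t' + (d-a'))%%d)%N 1 1 ha hb (ltn_pmod _ hd) ha' hb' (ltn_pmod _ hd)
  (fun y0 y1 y2 => @gateA_if a b t y0 y1 y2 ha hb ht)
  (fun y0 y1 y2 => @gateA_if a' b' t' y0 y1 y2 ha' hb' ht').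
rewrite H /attach0 conjC1 mulr1 mul1r.
by rewrite !modsub ?(ltnW ha) ?(ltnW ha') // !add0n !modn_small.
Qed.

Lemma tauE p (rho : op2 R) a b a' b' : (a < d)%N -> (b < d)%N -> (a' < d)%N -> (b' < d)%N ->
  tau p rho a b a' b' =
  \sum_(n < d) \sum_(m < d) real_complex R (p n m) *
    (om ^+ (b * m) * (rho a b a' b' *
       (((b == (a + n) %% d) && (b' == (a' + n) %% d))%N : nat)%:R) * (om ^+ (b' * m))^*).
Proof.
move=> ha hb ha' hb'.
rewrite /tau /project0.
have H := @conj3_fun (gateB R d) (pauli_channelT d p (conj3 d (gateA R d) (attach0 rho)))
  a b 0 a' b' 0 a b b a' b' b' 1 1 ha hb hb ha' hb' hb'
  (fun y0 y1 y2 => @gateB_if a b y0 y1 y2 ha hb)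
  (fun y0 y1 y2 => @gateB_if a' b' y0 y1 y2 ha' hb').
rewrite H conjC1 mulr1 mul1r /pauli_channelT.
apply: eq_bigr => n _; apply: eq_bigr => m _; congr (_ * _).
have hn : (n <= d)%N by apply: ltnW.
have H2 := @conj3_fun (onT d (pauli R d n m)) (conj3 d (gateA R d) (attach0 rho))
  a b b a' b' b' a b ((b + (d-n))%%d)%N a' b' ((b' + (d-n))%%d)%N (om ^+ (b * m)) (om ^+ (b' * m))
  ha hb (ltn_pmod _ hd) ha' hb' (ltn_pmod _ hd)
  (fun y0 y1 y2 => @onT_if n m a b b y0 y1 y2 ha hb hb hn)
  (fun y0 y1 y2 => @onT_if n m a' b' b' y0 y1 y2 ha' hb' hb' hn).
rewrite H2 S1E ?ltn_pmod //.
by rewrite !modsub.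
Qed.

Lemma omn k : om ^+ k * (om ^+ k)^* = 1.
Proof.
have h : om * om^* = 1.
  rewrite /omega /=; apply/eqP; simpc.
  by rewrite -!expr2 cos2Dsin2 mulrC addNr eqxx.
by rewrite rmorphXn /= -exprMn h expr1n.
Qed.

Definition nidx a b := ((b + (d - a)) %% d)%N.

Lemma tau_diag p (rho : op2 R) a b : (a < d)%N -> (b < d)%N ->
  tau p rho a b a b = real_complex R (pX d p (nidx a b)) * rho a b a b.
Proof.
move=> ha hb; rewrite tauE //.
have hk : (nidx a b < d)%N by rewrite ltn_pmod.
rewrite (sum1n hk) => [|j hj]; last first.
  apply: big1 => m _.
  rewrite andbb addnC -modsub ?(ltnW ha) // -/(nidx a b) eq_sym (negbTE hj).
  by rewrite /= ?mulr0n !(mulr0, mul0r).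
rewrite /= andbb addnC -modsub ?(ltnW ha) // -/(nidx a b) eqxx mulr1.
under eq_bigr => m _ do rewrite mulrAC omn mul1r.
by rewrite -mulr_suml /pX rmorph_sum.
Qed.

Lemma tau_blk0 p (rho : op2 R) a a' : (forall m, (1 <= m < d)%N -> p 0%N m = 0) ->
  (a < d)%N -> (a' < d)%N ->
  tau p rho a a a' a' = real_complex R (p 0%N 0%N) * rho a a a' a'.
Proof.
move=> hp0 ha ha'; rewrite tauE //.
rewrite (sum1n hd) => [|j hj]; last first.
  apply: big1 => m _.
  by rewrite noshift // (negbTE hj) /= ?mulr0n !(mulr0, mul0r).
rewrite /= (sum1n hd) => [|j hj]; last first.
  by rewrite hp0 ?lt0n ?hj ?ltn_ord // rmorph0 mul0r.
rewrite (_ : nat_of_ord (Ordinal hd) = 0%N) //.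
by rewrite !addn0 !modn_small // !eqxx !muln0 expr0 conjC1 mulr1 mul1r /= ?mulr1n mulr1.
Qed.

Lemma sum1nR {F : 'I_d -> R} {k : nat} (hk : (k < d)%N) :
  (forall j : 'I_d, (j : nat) != k -> F j = 0) -> \sum_(j < d) F j = F (Ordinal hk).
Proof.
move=> h; rewrite (bigD1 (Ordinal hk)) //= big1 ?addr0 // => j hj; apply: h.
Qed.

Lemma sum_nidx (f : nat -> R) a : (a < d)%N ->
  \sum_(b < d) f (nidx a b) = \sum_(n < d) f n.
Proof.
move=> ha.
transitivity (\sum_(b < d) \sum_(n < d) (((n : nat) == nidx a b) : nat)%:R * f n).
  apply: eq_bigr => b _.
  have hk : (nidx a b < d)%N by rewrite ltn_pmod.
  rewrite (sum1nR hk) => [|j hj]; first by rewrite /= eqxx mul1r.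
  by rewrite (negbTE hj) mul0r.
rewrite exchange_big; apply: eq_bigr => n _.
rewrite (sum1nR (ltn_pmod (n + a) hd)) => [|j hj].
  by rewrite /nidx /= eq_sym modsub ?ltn_pmod ?(ltnW ha) // eqxx mul1r.
by rewrite /nidx eq_sym modsub ?(ltnW ha) // (negbTE hj) mul0r.
Qed.

Lemma conj_rc (x : R) : (real_complex R x)^* = real_complex R x.
Proof. by apply/eqP; simpc. Qed.

Local Notation u := ((Num.sqrt (d%:R : R))^-1).

Lemma uu : u * u = (d%:R)^-1.
Proof. by rewrite -invfM -expr2 sqr_sqrtr ?ler0n. Qed.

Lemma bellE n m a b : (a < d)%N -> (b < d)%N ->
  bell R d n m a b = ((b == (a + n) %% d)%N : nat)%:R * om ^+ (m * a) * real_complex R u.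
Proof. by move=> ha hb; rewrite /bell /inr ha hb /= fmorphV. Qed.

Lemma bell00 a b : (a < d)%N -> (b < d)%N ->
  bell R d 0 0 a b = if (b == a)%N then real_complex R u else 0.
Proof.
move=> ha hb; rewrite bellE // addn0 modn_small // mul0n expr0 mulr1.
by case: eqP => _; rewrite ?mul1r ?mul0r.
Qed.

Definition Zn (p : nat -> nat -> R) N := \sum_(n < d) pX d p n ^+ N.+1.

Variable p : nat -> nat -> R.
Hypothesis hp_ge0 : forall n m, (n < d)%N -> (m < d)%N -> 0 <= p n m.
Hypothesis hp_sum : \sum_(n < d) \sum_(m < d) p n m = 1.
Hypothesis hp0 : forall m, (1 <= m < d)%N -> p 0%N m = 0.

Lemma pX_ge0 n : (n < d)%N -> 0 <= pX d p n.
Proof. by move=> hn; apply: sumr_ge0 => m _; apply: hp_ge0. Qed.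

Lemma Zn_gt0 N : 0 < Zn p N.
Proof.
have h0 : forall n : 'I_d, true -> 0 <= pX d p n ^+ N.+1.
  by move=> n _; rewrite exprn_ge0 // pX_ge0.
rewrite lt_def sumr_ge0 // andbT; apply/negP => /eqP /(psumr_eq0P h0) H.
have : \sum_(n < d) pX d p n = 0.
  by apply: big1 => n _; have /eqP := H n isT; rewrite expf_eq0 => /andP [_ /eqP].
by rewrite /pX hp_sum => /eqP; rewrite oner_eq0.
Qed.

Lemma Zn0 : Zn p 0 = 1.
Proof. by rewrite /Zn; under eq_bigr => n _ do rewrite expr1; rewrite /pX hp_sum. Qed.

Lemma roundE (rho : op2 R) a b a' b' :
  round d p rho a b a' b' = tau p rho a b a' b' / tr2 d (tau p rho).
Proof. by []. Qed.

Lemma alg1 (a x dd Z Z' : R) : dd != 0 -> Z != 0 -> Z' != 0 ->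
  a * (x / (dd * Z)) / (dd * (Z' / (dd * Z))) = a * x / (dd * Z').
Proof. move=> h1 h2 h3. field. by rewrite h1 h2 h3. Qed.

Lemma hd0 : (d%:R : R) != 0.
Proof. by rewrite pnatr_eq0 -lt0n. Qed.

Lemma inv N :
  (forall a a', (a < d)%N -> (a' < d)%N -> state_after d p N a a a' a' =
     real_complex R (p 0%N 0%N ^+ N.+1 / (d%:R * Zn p N))) /\
  (forall a b, (a < d)%N -> (b < d)%N -> state_after d p N a b a b =
     real_complex R (pX d p (nidx a b) ^+ N.+1 / (d%:R * Zn p N))).
Proof.
elim: N => [|N [IH1 IH2]].
  rewrite Zn0 mulr1 !expr1; split.
    move=> a a' ha ha'; rewrite /state_after /= /init_state.
    rewrite (sum1n hd) => [|j hj]; last first.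
      apply: big1 => m _.
      by rewrite /bell_proj !bellE // noshift // (negbTE hj) /= ?mulr0n !(mulr0, mul0r).
    rewrite /= (sum1n hd) => [|j hj]; last first.
      by rewrite hp0 ?lt0n ?hj ?ltn_ord // rmorph0 mul0r.
    rewrite /bell_proj (_ : nat_of_ord (Ordinal hd) = 0%N) // !bell00 // !eqxx conj_rc.
    rewrite -!rmorphM; congr (real_complex R _).
    by rewrite -invfM -expr2 sqr_sqrtr ?ler0n.
  move=> a b ha hb; rewrite /state_after /= /init_state.
  have hk : (nidx a b < d)%N by rewrite ltn_pmod.
  rewrite (sum1n hk) => [|j hj]; last first.
    apply: big1 => m _.
    rewrite /bell_proj !bellE // addnC -modsub ?(ltnW ha) // -/(nidx a b) eq_sym (negbTE hj).
    by rewrite /= ?mulr0n !(mulr0, mul0r).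
  under eq_bigr => m _ do rewrite /bell_proj !bellE // /= addnC -modsub ?(ltnW ha) // -/(nidx a b) eqxx mul1r rmorphM /= conj_rc mulrACA omn mul1r -rmorphM uu.
  by rewrite -mulr_suml -rmorph_sum -rmorphM expr1.
have hZ := Zn_gt0 N; have hZ' := Zn_gt0 N.+1.
have htr : tr2 d (tau p (state_after d p N)) =
    real_complex R (d%:R * (Zn p N.+1 / (d%:R * Zn p N))).
  rewrite /tr2.
  under eq_bigr => a _ do under eq_bigr => b _ do rewrite tau_diag // IH2 // -rmorphM.
  under eq_bigr => a _ do rewrite -rmorph_sum.
  rewrite -rmorph_sum; congr (real_complex R _).
  under eq_bigr => a _ do rewrite (sum_nidx (fun n => pX d p n * (pX d p n ^+ N.+1 / (d%:R * Zn p N)))) //.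
  set D := (d%:R * Zn p N).
  rewrite sumr_const card_ord mulr_natl; congr (_ *+ _).
  by rewrite /Zn mulr_suml; apply: eq_bigr => n _; rewrite [in RHS]exprS mulrA.
split.
  move=> a a' ha ha'; rewrite /state_after iterS -/(state_after d p N) roundE htr.
  rewrite tau_blk0 // IH1 // -rmorphM -fmorph_div; congr (real_complex R _).
  by rewrite [in RHS]exprS alg1 // ?hd0 ?gt_eqF.
move=> a b ha hb; rewrite /state_after iterS -/(state_after d p N) roundE htr.
rewrite tau_diag // IH2 // -rmorphM -fmorph_div; congr (real_complex R _).
by rewrite [in RHS]exprS alg1 // ?hd0 ?gt_eqF.
Qed.


Lemma mulrnn (y : R) n : y *+ n *+ n = y * (n%:R * n%:R).
Proof. by rewrite -mulrnA -natrM mulr_natr. Qed.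

Lemma alg2 (s x D Z : R) : s * s = D -> D != 0 -> Z != 0 ->
  s^-1 * (x / (D * Z)) / s * (D * D) = x / Z.
Proof.
move=> hs hD hZ.
have s0 : s != 0 by apply: contraNneq hD => e; rewrite -hs e mul0r.
rewrite -hs; field; by rewrite s0 hZ.
Qed.
Lemma fidE N : fidelity d p N = real_complex R (p 0%N 0%N ^+ N.+1 / Zn p N).
Proof.
have [IH1 _] := inv N.
rewrite /fidelity.
transitivity (\sum_(a < d) \sum_(a' < d) (real_complex R u)^* *
   state_after d p N a a a' a' * real_complex R u).
  apply: eq_bigr => a _.
  rewrite (sum1n (ltn_ord a)) => [|j hj]; last first.
    apply: big1 => a' _; apply: big1 => b' _.
    by rewrite bell00 // (negbTE hj) conjC0 !mul0r.
  rewrite (_ : nat_of_ord (Ordinal (ltn_ord a)) = a) // bell00 // eqxx.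
  apply: eq_bigr => a' _.
  rewrite (sum1n (ltn_ord a')) => [|j hj]; last first.
    by rewrite bell00 // (negbTE hj) mulr0.
  by rewrite (_ : nat_of_ord (Ordinal (ltn_ord a')) = a') // bell00 // eqxx.
under eq_bigr => a _ do under eq_bigr => a' _ do rewrite IH1 // conj_rc -!rmorphM.
under eq_bigr => a _ do rewrite -rmorph_sum.
rewrite -rmorph_sum; congr (real_complex R _).
rewrite !sumr_const !card_ord mulrnn.
apply: alg2; [by rewrite -expr2 sqr_sqrtr ?ler0n | exact: hd0 | by rewrite gt_eqF // Zn_gt0].
Qed.
End Alg.
From mathcomp.algebra_tactics Require Import lra.

Section Ana.
Variable R : realType.

Lemma cvg_sum0 (f : nat -> nat -> R) k :
  (forall i, (i < k)%N -> f i x @[x --> \oo] --> 0) ->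
  (fun N => \sum_(i < k) f i N) @ \oo --> 0.
Proof.
elim: k => [|k IH] H.
  have -> : (fun N => \sum_(i < 0) f i N) = (fun=> 0) by apply/funext => N; rewrite big_ord0.
  exact: cvg_cst.
have -> : (fun N => \sum_(i < k.+1) f i N) = (fun N => \sum_(i < k) f i N + f k N).
  by apply/funext => N; rewrite big_ord_recr.
have := cvgD (IH (fun i hi => H i (ltnW hi))) (H k (ltnSn k)).
rewrite addr0; apply; apply: eventually_filter.
Qed.

Lemma sum_ge_one (k : nat) (x : nat -> R) (i : 'I_k) (M : nat) :
  (forall j, (j < k)%N -> 0 <= x j) -> x i ^+ M <= \sum_(j < k) x j ^+ M.
Proof.
move=> hx; rewrite (bigD1 i) //= lerDl sumr_ge0 // => j _.
by rewrite exprn_ge0 // hx.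
Qed.

Lemma lim_char (k : nat) (a : R) (x : nat -> R) : (0 < k)%N -> 0 <= a ->
  (forall i, (i < k)%N -> 0 <= x i) ->
  ((fun N => a ^+ N.+1 / (a ^+ N.+1 + \sum_(i < k) x i ^+ N.+1)) @ \oo --> (1 : R)) <->
  (forall i, (i < k)%N -> x i < a).
Proof.
move=> hk ha hx; split.
  move=> H i hi; rewrite ltNge; apply/negP => hle.
  have hb : forall N, a ^+ N.+1 / (a ^+ N.+1 + \sum_(i < k) x i ^+ N.+1) <= 2^-1.
    move=> N.
    have h1 : a ^+ N.+1 <= x i ^+ N.+1 by rewrite lerXn2r // nnegrE ?hx.
    have h2 := @sum_ge_one k x (Ordinal hi) N.+1 hx.
    have hA : 0 <= a ^+ N.+1 by rewrite exprn_ge0.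
    set A := a ^+ N.+1 in h1 hA *; set S := \sum_(i < k) x i ^+ N.+1 in h2 *.
    rewrite /= in h2.
    have [D0|Dpos] := eqVneq (A + S) 0.
      by rewrite D0 invr0 mulr0; lra.
    have hD : 0 < A + S by rewrite lt_def Dpos /=; lra.
    rewrite ler_pdivrMr //; lra.
  have hc := cvgP _ H.
  have := limr_le hc (nearW _ hb).
  rewrite (cvg_lim _ H) // => h.
  have := h eventually_filter eventually_filter; lra.
move=> H.
have ha0 : 0 < a by apply: (le_lt_trans (hx 0%N hk)); apply: H.
set hs := fun N => \sum_(i < k) (x i / a) ^+ N.
have hh : hs @ \oo --> 0.
  rewrite /hs; apply: (@cvg_sum0 (fun i N => (x i / a) ^+ N) k) => i hi; apply: cvg_expr.
  rewrite ger0_norm ?divr_ge0 ?hx ?ltW //.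
  by rewrite ltr_pdivrMr // mul1r H.
apply: (squeeze_cvgr (f := fun N => 1 - hs N) (h := fun=> 1)).
- apply: nearW => N.
  have hA : 0 < a ^+ N.+1 by rewrite exprn_gt0.
  have hS : 0 <= \sum_(i < k) x i ^+ N.+1 by rewrite sumr_ge0 // => i _; rewrite exprn_ge0 ?hx.
  have hSA : (\sum_(i < k) x i ^+ N.+1) / a ^+ N.+1 <= hs N.
    rewrite /hs mulr_suml; apply: ler_sum => i _.
    rewrite -expr_div_n exprS ler_piMl ?exprn_ge0 ?divr_ge0 ?hx ?ltW //.
    by rewrite ltr_pdivrMr // mul1r H.
  set A := a ^+ N.+1 in hA hSA *; set S := \sum_(i < k) x i ^+ N.+1 in hS hSA *.
  have hD : 0 < A + S by lra.
  apply/andP; split.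
    have e : A / (A + S) = 1 - S / (A + S) by field; rewrite gt_eqF.
    rewrite e lerB // (le_trans _ hSA) //.
    rewrite ler_pdivrMr // mulrAC ler_pdivlMr // ler_wpM2l //; lra.
  by rewrite ler_pdivrMr // mul1r; lra.
- by rewrite -[X in _ --> X]subr0; apply: cvgB => //; exact: cvg_cst.
- exact: cvg_cst.
Qed.

End Ana.

Theorem proposition2 (R : realType) (d : nat) (p : nat -> nat -> R) :
  (2 <= d)%N ->
  (forall n m, (n < d)%N -> (m < d)%N -> 0 <= p n m) ->
  \sum_(n < d) \sum_(m < d) p n m = 1 ->
  (forall m, (1 <= m < d)%N -> p 0%N m = 0) ->
  ((fun N => complex.Re (fidelity d p N)) @ \oo --> (1 : R) /\
   (fun N => complex.Im (fidelity d p N)) @ \oo --> (0 : R))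
  <->
  (forall n, (1 <= n < d)%N -> pX d p n < p 0%N 0%N).
Proof.
move=> hd2 hge hsum hp0.
have hd : (0 < d)%N by apply: ltnW.
have hF : (fun N => complex.Re (fidelity d p N)) = (fun N => p 0%N 0%N ^+ N.+1 / Zn R d p N).
  by apply/funext => N; rewrite (@fidE R d hd p hge hsum hp0).
have hI : (fun N => complex.Im (fidelity d p N)) = (fun=> 0).
  by apply/funext => N; rewrite (@fidE R d hd p hge hsum hp0).
rewrite hF hI.
have [k hk] : exists k, d = k.+1 by exists d.-1; rewrite prednK.
subst d.
have hk0 : (0 < k)%N by [].
have hpX0 : pX k.+1 p 0 = p 0%N 0%N.
  rewrite /pX big_ord_recl big1 ?addr0 // => i _.
  by apply: hp0; rewrite /= ltnS ltn_ord.
have e : (fun N => p 0%N 0%N ^+ N.+1 / Zn R k.+1 p N) =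
    (fun N => p 0%N 0%N ^+ N.+1 / (p 0%N 0%N ^+ N.+1 + \sum_(i < k) pX k.+1 p i.+1 ^+ N.+1)).
  apply/funext => N; rewrite /Zn big_ord_recl hpX0.
  by under eq_bigr => i _ do rewrite lift0.
rewrite e.
have hx : forall i, (i < k)%N -> 0 <= pX k.+1 p i.+1.
  by move=> i hi; apply: pX_ge0.
have ha : 0 <= p 0%N 0%N by apply: hge.
have L := @lim_char R k _ _ hk0 ha hx.
split.
  move=> [H _] n /andP [h1 h2].
  have := (L.1 H) n.-1; rewrite prednK // => -> //.
move=> H; split; last exact: cvg_cst.
apply: L.2 => i hi; apply: H; apply/andP; split => //; rewrite ltnS.
Qed.
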